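(* For each integer $k\ge 2$ there exists a complete tripartite graph that is uniquely $k$-list colorable. (For instance, $K_{N,N,N}$ with $N=(k-1)\binom{2k-2}{k-1}$ is such a graph.)
   Context: All graphs are finite, simple and undirected. A list assignment $L$ for a graph $G$ assigns to each vertex $v$ a set $L(v)$ of colors; an $L$-coloring is a proper vertex coloring $c$ of $G$ with $c(v)\in L(v)$ for every vertex $v$. A $k$-list assignment is a list assignment with $|L(v)|=k$ for all $v$. $G$ is uniquely $k$-list colorable (U$k$LC) if there exists a $k$-list assignment $L$ such that $G$ has exactly one $L$-coloring. $K_{n_1,\dots,n_r}$ denotes the complete $r$-partite graph with parts of sizes $n_1,\dots,n_r$. *)

(* Defs.v *)
From mathcomp Require Import all_boot.
Set Implicit Arguments. Unset Strict Implicit. Unset Printing Implicit Defensive.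

(* A graph on a finite vertex type T is given by an adjacency relation adj
   (for the graphs considered here it is symmetric and irreflexive).
   Colors are natural numbers. *)

Definition k_list_assignment (T : finType) (k : nat) (L : T -> seq nat) : Prop :=
  forall v : T, uniq (L v) /\ size (L v) = k.

Definition L_coloring (T : finType) (adj : rel T) (L : T -> seq nat) (c : T -> nat) : Prop :=
  (forall v : T, c v \in L v) /\ (forall u v : T, adj u v -> c u != c v).

Definition uniquely_k_list_colorable (T : finType) (adj : rel T) (k : nat) : Prop :=
  exists L : T -> seq nat,
    k_list_assignment k L /\
    exists c : T -> nat, L_coloring adj L c /\
      forall c' : T -> nat, L_coloring adj L c' -> forall v, c' v = c v.

(* Complete r-partite graph K_{n_0,...,n_{r-1}}: vertices are pairs (i, j) with
   i a part index and j < n i; two vertices are adjacent iff they lie in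
   different parts. *)
Definition cmp_vertex (r : nat) (n : 'I_r -> nat) : finType := {i : 'I_r & 'I_(n i)}.

Definition cmp_adj (r : nat) (n : 'I_r -> nat) : rel (cmp_vertex n) :=
  fun u v => tag u != tag v.

(* Main.v *)
Require Import Defs.
From mathcomp Require Import all_boot.
From mathcomp Require Import zify.

Unset Printing Implicit Defensive.

Definition Fp (p : nat) : finType := ('I_p * {set 'I_(3*p)})%type.

Lemma oc_proof p (i : 'I_3) (t : 'I_p) : 3 * t + i < 3 * p.
Proof. have := ltn_ord i; have := ltn_ord t; lia. Qed.

Definition oc p (i : 'I_3) (t : 'I_p) : 'I_(3*p) := Ordinal (oc_proof p i t).

Definition O p (i : 'I_3) : {set 'I_(3*p)} := [set oc p i t | t : 'I_p].
Definition W p (i : 'I_3) : {set 'I_(3*p)} := [set x : 'I_(3*p) | x %% 3 != i].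

Lemma mem_O p i (x : 'I_(3*p)) : (x \in O p i) = (x %% 3 == i).
Proof.
apply/imsetP/eqP => [[t _ ->] /= | hx].
  have := ltn_ord i; lia.
have hlt : x %/ 3 < p by have := ltn_ord x; lia.
exists (Ordinal hlt) => //; apply: val_inj => /=; have := ltn_ord i; lia.
Qed.

Lemma card_O p i : #|O p i| = p.
Proof.
rewrite card_imset ?card_ord // => a b /(congr1 val) /= h; apply: val_inj; rewrite /= in h *; lia.
Qed.

Lemma W_OC p i : W p i = ~: O p i.
Proof. by apply/setP => x; rewrite !inE mem_O. Qed.

Lemma card_W p i : #|W p i| = 2 * p.
Proof. have := cardsC (O p i); rewrite -W_OC card_O card_ord; lia. Qed.

Lemma own_mod (i : 'I_3) (t : nat) : (3 * t + i) %% 3 = i.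
Proof. by rewrite mulnC modnMDl modn_small. Qed.

Definition valid p (i : 'I_3) (T : {set 'I_(3*p)}) := (T \subset W p i) && (p <= #|T|).
Definition chosen p i T := if valid p i T then T else W p i.
Definition tail p i T : seq nat := take p [seq val x | x <- enum (chosen p i T)].

Lemma chosen_sub p i T : chosen p i T \subset W p i.
Proof. rewrite /chosen; case: ifP => [/andP[]//|_]; exact: subxx. Qed.
Lemma chosen_card p i T : p <= #|chosen p i T|.
Proof. rewrite /chosen; case: ifP => [/andP[]//|_]; rewrite card_W; lia. Qed.

Lemma mem_tail p i T y : y \in tail p i T ->
  exists2 x : 'I_(3*p), x \in chosen p i T & y = val x.
Proof. move/mem_take/mapP => [x]; rewrite mem_enum => hx ->; by exists x. Qed.

Lemma size_tail p i T : size (tail p i T) = p.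
Proof. rewrite size_takel // size_map -cardE; exact: chosen_card. Qed.

Lemma uniq_tail p i T : uniq (tail p i T).
Proof. apply: take_uniq; rewrite map_inj_uniq ?enum_uniq //; exact: val_inj. Qed.

Definition nn p : 'I_3 -> nat := fun _ => #|{: Fp p}|.

Definition Lst p (v : cmp_vertex (nn p)) : seq nat :=
  let tT := @enum_val (Fp p) _ (tagged v) in
  (3 * tT.1 + tag v) :: tail p (tag v) tT.2.

Definition col p (v : cmp_vertex (nn p)) : nat :=
  3 * (@enum_val (Fp p) _ (tagged v)).1 + tag v.

Definition mkv p (i : 'I_3) (j : 'I_#|{: Fp p}|) : cmp_vertex (nn p) :=
  @existT _ (fun i0 : 'I_3 => 'I_(nn p i0)) i j.

Theorem theorem3p1 :
  forall k : nat, 2 <= k ->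
  exists n : 'I_3 -> nat,
    (forall i, 0 < n i) /\
    uniquely_k_list_colorable (@cmp_adj 3 n) k.
Proof.
move=> k hk; set p := k.-1.
have hp : 0 < p by rewrite /p; lia.
have kp : k = p.+1 by rewrite /p; lia.
exists (nn p); split.
  by move=> i; apply/card_gt0P; exists (Ordinal hp, set0).
exists (@Lst p); split.
  move=> v; rewrite /Lst /= size_tail kp; split=> //=.
  rewrite uniq_tail andbT; apply/negP => /mem_tail [x hx e].
  have := subsetP (chosen_sub _ _ _) _ hx; rewrite inE -e.
  by rewrite mulnC modnMDl modn_small ?ltn_ord ?eqxx.

exists (@col p); split.
  split; first by move=> v; rewrite /Lst /col mem_head.
  move=> u v; rewrite /cmp_adj /col => huv; apply/eqP => e.
  move/eqP: huv; apply; apply: val_inj.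
  by move/(congr1 (modn^~ 3)): e; rewrite !own_mod.
move=> c' [hin hadj].
pose S i : {set 'I_(3*p)} :=
  [set x | [exists j : 'I_#|{: Fp p}|, c' (mkv p i j) == val x]].
have hS : forall i j (x : 'I_(3*p)), c' (mkv p i j) = val x -> x \in S i.
  by move=> i j x e; rewrite inE; apply/existsP; exists j; apply/eqP.
have hdisj : forall i i' x, i != i' -> x \in S i -> x \in S i' -> False.
  move=> i i' x hii; rewrite !inE => /existsP [j /eqP e1] /existsP [j' /eqP e2].
  have := hadj (mkv p i j) (mkv p i' j'); rewrite /cmp_adj /= hii e1 e2 eqxx.
  by move=> /(_ isT).
have hlt : forall v, c' v < 3 * p.
  move=> v; have := hin v; rewrite /Lst in_cons => /orP [/eqP -> | /mem_tail [x _ ->]].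
    exact: oc_proof.
  exact: ltn_ord.
have key : forall i, ~~ (O p i \subset S i) -> p < #|S i|.
  move=> i hn; rewrite ltnNge; apply/negP => hle.
  have [x xO xS] := subsetPn hn.
  case/imsetP: xO => t _ ex.
  set T := W p i :\: S i.
  have vT : valid p i T.
    rewrite /valid subsetDl /= /T cardsD card_W.
    have : #|W p i :&: S i| <= #|S i| by apply: subset_leq_card; apply: subsetIr.
    lia.
  set j := @enum_rank (Fp p) (t, T).
  have := hin (mkv p i j); rewrite /Lst /= /j enum_rankK /= in_cons.
  case/orP => [/eqP e | /mem_tail [y hy e]].
    by move: xS; rewrite (hS i j x) // e ex.
  move: hy; rewrite /chosen vT /T inE (hS i j y e) //.
have hO : forall i, O p i \subset S i.
  have hge : forall i, p <= #|S i|.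
    move=> i; case: (boolP (O p i \subset S i)) => h.
      by have := subset_leq_card h; rewrite card_O.
    exact: ltnW (key i h).
  move=> i0; apply/negPn/negP => /key hi0.
  pose a : 'I_3 := @Ordinal 3 0 isT.
  pose b : 'I_3 := @Ordinal 3 1 isT.
  pose c : 'I_3 := @Ordinal 3 2 isT.
  have D : forall i i', i != i' -> S i :&: S i' = set0.
    move=> i i' hii; apply/setP => x; rewrite in_setI in_set0.
    by apply/negbTE/negP => /andP [h1 h2]; exact: hdisj hii h1 h2.
  have Dab := D a b isT; have Dac := D a c isT; have Dbc := D b c isT.
  have U1 := cardsU (S a) (S b); rewrite Dab cards0 in U1.
  have U2 := cardsU (S a :|: S b) (S c).
  rewrite setIUl Dac Dbc setU0 cards0 in U2.
  have : #|S a :|: S b :|: S c| <= 3 * p.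
    by rewrite -[X in _ <= X](card_ord (3 * p)); apply: max_card.
  have ha := hge a; have hb := hge b; have hc := hge c.
  have : i0 = a \/ i0 = b \/ i0 = c.
    case: i0 hi0 => [[|[|[|n]]] hn] _.
    - by left; apply: val_inj.
    - by right; left; apply: val_inj.
    - by right; right; apply: val_inj.
    - by [].
  case=> [E|[E|E]]; rewrite E in hi0; lia.
move=> [i j]; have := hin (mkv p i j); rewrite /Lst /col /= in_cons.
case/orP => [/eqP -> // | /mem_tail [y hy e]].
have hyW := subsetP (chosen_sub _ _ _) _ hy; rewrite inE in hyW.
have hy3 : y %% 3 < 3 by apply: ltn_pmod.
pose i' : 'I_3 := Ordinal hy3.
have yi' : y \in S i'.
  by apply: (subsetP (hO i')); rewrite mem_O.
exfalso; apply: (hdisj i i' y) => //; last exact: (hS i j y e).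
by apply/negP => /eqP E; move: hyW; rewrite E /= eqxx.
Qed.
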